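(* Let $G$ be a query graph that is splittable and f-closed, with $E^i\neq\emptyset$. Then any sink $C^{sep}\in\mathrm{Eq}$ minimizing $|coupled^{\oplus}(C)|$ among all sinks $C\in\mathrm{Eq}$ is a separator.
   Context: $G=G[Q]$ is the query graph of a Boolean CQ without self-joins with atoms $R(u,v)$, $u\ne v$, first attribute the key: vertices are variables, each atom gives an edge $e_R=(u_R,v_R)$, consistent/inconsistent according to the type of $R$; $E^i$ = inconsistent edges. Paths may have zero edges. $x\to y$: a directed path from $x$ to $y$ with only consistent edges; $x\leadsto y$: any directed path; undirected paths ignore directions. For a path $P$ and vertex set $N$, $P\cap N$ is the set of vertices of $P$ (endpoints included) in $N$. $u^{\oplus}=\{v:u\to v\}$, $u^+=\{v:u\leadsto v\}$, $u^{+,R}=\{v: u\leadsto v$ in $G-\{e_R\}\}$. For $R,S\in E^i$: $R\lesssim S$ iff $u_S\in u_R^+$; $R\sim S$ iff $R\lesssim S$ and $S\lesssim R$; $[R]$ the class of $R$; $coupled^+(R)=[R]\cup\{S\in E^i:\exists$ undirected path $P$ from $v_R$ to $u_S$ with $P\cap u_R^{+,R}=\emptyset\}$; $R,S$ are coupled if $R\in coupled^+(S)$ and $S\in coupled^+(R)$; $G$ is splittable if every coupled pair $R,S$ satisfies $R\sim S$. $\mathrm{Eq}$ is the set of $\sim$-classes of $E^i$; for $C\in\mathrm{Eq}$, $C^{\oplus}=\bigcap_{R\in C}u_R^{\oplus}$ and $coupled^{\oplus}(C)=\{C\}\cup\{C'\in\mathrm{Eq}:\exists R\in C,S\in C'$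 and an undirected path $P$ from $v_R$ to $u_S$ with $P\cap C^{\oplus}=\emptyset\}$. $C_1\le^{\oplus}C_2$ iff some $S\in C_2$ has $u_S\in C_1^{\oplus}$; $C_1<^{\oplus}C_2$ iff $C_1\le^{\oplus}C_2$ and $C_1\ne C_2$ (a strict partial order). A sink is a maximal element of $<^{\oplus}$. A separator is a sink $C$ such that every $C'\in coupled^{\oplus}(C)$ with $C'\ne C$ satisfies $C'<^{\oplus}C$. $G$ is f-closed if for every $R\in E^i$, $v_R^{\oplus}\cap u_R^{+,R}\subseteq u_R^{\oplus}$. *)

(* Defs.v *)
From mathcomp Require Import all_boot.
Set Implicit Arguments. Unset Strict Implicit. Unset Printing Implicit Defensive.

(* A query graph: vertices V (variables), atoms A (one edge per atom, no
   self-joins so atoms = relation names), e_R = (u R, v R), inc R = R is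
   inconsistent. *)
Section QueryGraph.
Variables (V A : finType) (u v : A -> V) (inc : pred A).

Definition cedge : rel V := fun a b => [exists R, ~~ inc R && (u R == a) && (v R == b)].
Definition dedge : rel V := fun a b => [exists R, (u R == a) && (v R == b)].
Definition dedge_wo (R0 : A) : rel V :=
  fun a b => [exists R, (R != R0) && (u R == a) && (v R == b)].
Definition uedge : rel V :=
  fun a b => [exists R, ((u R == a) && (v R == b)) || ((u R == b) && (v R == a))].

Definition cpath (x y : V) : bool := connect cedge x y.
Definition dpath (x y : V) : bool := connect dedge x y.

Definition oplus (x : V) : {set V} := [set y | cpath x y].
Definition plus (x : V) : {set V} := [set y | dpath x y].
Definition plusR (x : V) (R : A) : {set V} := [set y | connect (dedge_wo R) x y].

Definition upath_avoid (N : {set V}) (x y : V) : bool :=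
  (x \notin N) &&
  connect (fun a b => (a \notin N) && (b \notin N) && uedge a b) x y.

Definition lesim (R S : A) : bool := u S \in plus (u R).
Definition sim (R S : A) : bool := lesim R S && lesim S R.

Definition cls (R : A) : {set A} := [set S | inc S && sim R S].

Definition coupled_plus (R : A) : {set A} :=
  cls R :|: [set S | inc S && upath_avoid (plusR (u R) R) (v R) (u S)].

Definition coupled (R S : A) : bool :=
  (R \in coupled_plus S) && (S \in coupled_plus R).

Definition splittable : Prop :=
  forall R S, inc R -> inc S -> coupled R S -> sim R S.

Definition f_closed : Prop :=
  forall R, inc R -> oplus (v R) :&: plusR (u R) R \subset oplus (u R).

Definition Eqc : {set {set A}} := [set cls R | R in [set R | inc R]].

Definition Coplus (C : {set A}) : {set V} :=
  [set x | [forall R in C, cpath (u R) x]].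

Definition coupled_oplus (C : {set A}) : {set {set A}} :=
  C |: [set C' in Eqc |
         [exists R in C, exists S in C', upath_avoid (Coplus C) (v R) (u S)]].

Definition le_oplus (C1 C2 : {set A}) : bool :=
  [exists S in C2, u S \in Coplus C1].
Definition lt_oplus (C1 C2 : {set A}) : bool := le_oplus C1 C2 && (C1 != C2).

Definition sink (C : {set A}) : bool :=
  (C \in Eqc) && [forall C' in Eqc, ~~ lt_oplus C C'].

Definition separator (C : {set A}) : bool :=
  sink C && [forall C' in coupled_oplus C, (C' != C) ==> lt_oplus C' C].

End QueryGraph.

(* Main.v *)
Require Import Defs.
From mathcomp Require Import all_boot.
Set Implicit Arguments. Unset Strict Implicit. Unset Printing Implicit Defensive.

Lemma connect_ind_last (T : finType) (e : rel T) (x : T) (P : T -> Prop) :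
  P x -> (forall y z, connect e x y -> P y -> e y z -> P z) ->
  forall y, connect e x y -> P y.
Proof.
move=> Px IH y /connectP [p]; elim/last_ind: p y => [|p z IHp] y /=.
  by move=> _ ->.
rewrite rcons_path last_rcons => /andP [pp ez] ->.
apply: (IH (last x p)) => //; first by apply/connectP; exists p.
exact: IHp.
Qed.

Lemma connect_ind_first (T : finType) (e : rel T) (t : T) (P : T -> Prop) :
  P t -> (forall x y, e x y -> connect e y t -> P y -> P x) ->
  forall x, connect e x t -> P x.
Proof.
move=> Pt IH x /connectP [p]; elim: p x => [|y p IHp] x /=.
  by move=> _ Et; rewrite -Et.
move=> /andP [exy py] Et; apply: (IH x y) => //.
  by apply/connectP; exists p.
exact: IHp.
Qed.

Section G.
Variables (V A : finType) (u v : A -> V) (inc : pred A).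
Implicit Types (N : {set V}) (x y z a b w : V) (C D X : {set A}) (R S T E F : A).

Definition rav (N : {set V}) : rel V :=
  fun a b => (a \notin N) && (b \notin N) && uedge u v a b.

Lemma uaE N x y : upath_avoid u v N x y = (x \notin N) && connect (rav N) x y.
Proof. by []. Qed.

Lemma uedge_sym : symmetric (uedge u v).
Proof.
move=> a b; rewrite /uedge; apply: eq_existsb => R; by rewrite orbC.
Qed.

Lemma rav_sym N : symmetric (rav N).
Proof. by move=> a b; rewrite /rav uedge_sym (andbC (a \notin N)). Qed.

Lemma ua_refl N x : x \notin N -> upath_avoid u v N x x.
Proof. by move=> xN; rewrite uaE xN connect0. Qed.

Lemma ua_end N x y : upath_avoid u v N x y -> y \notin N.
Proof.
rewrite uaE => /andP [xN]; apply: (@connect_ind_last _ _ x (fun y => y \notin N)) => //.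
by move=> a b _ _ /andP [/andP []].
Qed.

Lemma ua_step N x y z : upath_avoid u v N x y -> uedge u v y z -> z \notin N ->
  upath_avoid u v N x z.
Proof.
move=> H yz zN; have yN := ua_end H; move: H; rewrite !uaE => /andP [-> c].
by apply: (connect_trans c); apply: connect1; rewrite /rav yN zN.
Qed.

Lemma ua_trans N x y z : upath_avoid u v N x y -> upath_avoid u v N y z ->
  upath_avoid u v N x z.
Proof.
by rewrite !uaE => /andP [-> c1] /andP [_ c2]; rewrite (connect_trans c1 c2).
Qed.

Lemma ua_sym N x y : upath_avoid u v N x y -> upath_avoid u v N y x.
Proof.
move=> H; have yN := ua_end H; move: H; rewrite !uaE => /andP [_ c].
by rewrite yN (sym_connect_sym (@rav_sym N)).
Qed.

Lemma ua_conv N N' x y : upath_avoid u v N x y ->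
  (forall z, upath_avoid u v N x z -> z \notin N') -> upath_avoid u v N' x y.
Proof.
move=> H HN; have xN : x \notin N by move: H; rewrite uaE => /andP [].
move: H; rewrite uaE => /andP [_]; apply: (@connect_ind_last _ _ x (fun y => upath_avoid u v N' x y)).
  by apply: ua_refl; apply: HN; apply: ua_refl.
move=> a b cab Ha /andP [/andP [aN bN] ab].
have Hxa : upath_avoid u v N x a by rewrite uaE xN.
apply: (ua_step Ha ab); exact: HN (ua_step Hxa ab bN).
Qed.

Lemma dir_ua (e : rel V) N a b : (forall x y, e x y -> uedge u v x y) ->
  connect e a b -> (forall z, connect e a z -> connect e z b -> z \notin N) ->
  upath_avoid u v N a b.
Proof.
move=> eu cab HN.
suff: connect e b b -> upath_avoid u v N a b by apply; exact: connect0.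
move: b cab HN; apply: (@connect_ind_last _ _ a (fun b =>
  (forall z, connect e a z -> connect e z b -> z \notin N) ->
  connect e b b -> upath_avoid u v N a b)).
  by move=> HN _; apply: ua_refl; apply: HN; exact: connect0.
move=> y z cay IH ez HN _.
have czz := connect0 e z.
apply: ua_step (eu _ _ ez) _; last by apply: HN czz; apply: connect_trans cay (connect1 ez).
apply: IH (connect0 e y) => w c1 c2; apply: HN c1 _.
exact: connect_trans c2 (connect1 ez).
Qed.


Local Notation ced := (cedge u v inc).
Local Notation ded := (dedge u v).
Local Notation NE E := (plusR u v (u E) E).
Local Notation Cop C := (Coplus u v inc C).
Local Notation ua := (upath_avoid u v).

Lemma dedgeP a b : reflect (exists R, u R = a /\ v R = b) (ded a b).
Proof.
apply: (iffP existsP) => [[R /andP [/eqP <- /eqP <-]]|[R [<- <-]]]; exists R => //.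
by rewrite !eqxx.
Qed.

Lemma cedgeP a b : reflect (exists R, [/\ ~~ inc R, u R = a & v R = b]) (ced a b).
Proof.
apply: (iffP existsP) => [[R /andP [/andP [iR /eqP <-] /eqP <-]]|[R [iR <- <-]]]; exists R => //.
by rewrite iR !eqxx.
Qed.

Lemma dedge_woP E a b : reflect (exists R, [/\ R != E, u R = a & v R = b]) (dedge_wo u v E a b).
Proof.
apply: (iffP existsP) => [[R /andP [/andP [iR /eqP <-] /eqP <-]]|[R [iR <- <-]]]; exists R => //.
by rewrite iR !eqxx.
Qed.

Lemma edge_ded R : ded (u R) (v R).
Proof. by apply/dedgeP; exists R. Qed.

Lemma edge_ued R : uedge u v (u R) (v R).
Proof. by apply/existsP; exists R; rewrite !eqxx. Qed.

Lemma ded_ued a b : ded a b -> uedge u v a b.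
Proof. by case/dedgeP => R [<- <-]; apply: edge_ued. Qed.

Lemma ced_ded a b : ced a b -> ded a b.
Proof. by case/cedgeP => R [_ <- <-]; apply: edge_ded. Qed.

Lemma ced_ued a b : ced a b -> uedge u v a b.
Proof. by move/ced_ded/ded_ued. Qed.

Lemma wo_ded E a b : dedge_wo u v E a b -> ded a b.
Proof. by case/dedge_woP => R [_ <- <-]; apply: edge_ded. Qed.

Lemma wo_ued E a b : dedge_wo u v E a b -> uedge u v a b.
Proof. by move/wo_ded/ded_ued. Qed.

Lemma ced_wo F a b : inc F -> ced a b -> dedge_wo u v F a b.
Proof.
move=> iF /cedgeP [R [iR <- <-]]; apply/dedge_woP; exists R; split => //.
by apply: contraNneq iR => ->.
Qed.

Lemma cp_dp x y : cpath u v inc x y -> dpath u v x y.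
Proof. by apply: connect_sub => a b /ced_ded/connect1. Qed.

Lemma wo_dp E x y : connect (dedge_wo u v E) x y -> dpath u v x y.
Proof. by apply: connect_sub => a b /wo_ded/connect1. Qed.

Lemma cp_wo F x y : inc F -> cpath u v inc x y -> connect (dedge_wo u v F) x y.
Proof. by move=> iF; apply: connect_sub => a b /(ced_wo iF)/connect1. Qed.

Lemma oplusE x y : (y \in oplus u v inc x) = cpath u v inc x y.
Proof. by rewrite inE. Qed.

Lemma plusE x y : (y \in plus u v x) = dpath u v x y.
Proof. by rewrite inE. Qed.

Lemma plusRE x E y : (y \in plusR u v x E) = connect (dedge_wo u v E) x y.
Proof. by rewrite inE. Qed.

Lemma CopE C x : (x \in Cop C) = [forall R in C, cpath u v inc (u R) x].
Proof. by rewrite inE. Qed.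

Lemma CopP C x : reflect (forall R, R \in C -> cpath u v inc (u R) x) (x \in Cop C).
Proof. by rewrite CopE; apply: (iffP forall_inP). Qed.

Lemma cp_trans x y z : cpath u v inc x y -> cpath u v inc y z -> cpath u v inc x z.
Proof. exact: connect_trans. Qed.

Lemma dp_trans x y z : dpath u v x y -> dpath u v y z -> dpath u v x z.
Proof. exact: connect_trans. Qed.

Lemma Cop_closed C x y : x \in Cop C -> cpath u v inc x y -> y \in Cop C.
Proof.
move=> /CopP H cxy; apply/CopP => R RC; exact: cp_trans (H R RC) cxy.
Qed.

Lemma sim_refl R : sim u v R R.
Proof. by rewrite /sim /lesim plusE /dpath connect0. Qed.

Lemma sim_sym R S : sim u v R S -> sim u v S R.
Proof. by rewrite /sim andbC. Qed.

Lemma sim_trans R S T : sim u v R S -> sim u v S T -> sim u v R T.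
Proof.
rewrite /sim /lesim !plusE => /andP [h1 h2] /andP [h3 h4].
by rewrite (dp_trans h1 h3) (dp_trans h4 h2).
Qed.

Lemma simE R S : sim u v R S = dpath u v (u R) (u S) && dpath u v (u S) (u R).
Proof. by rewrite /sim /lesim !plusE. Qed.

Lemma clsE R S : (S \in cls u v inc R) = inc S && sim u v R S.
Proof. by rewrite inE. Qed.

Lemma cls_eq R S : sim u v R S -> cls u v inc R = cls u v inc S.
Proof.
move=> hRS; apply/setP => T; rewrite !clsE; case: (inc T) => //=.
apply/idP/idP => h; first exact: sim_trans (sim_sym hRS) h.
exact: sim_trans hRS h.
Qed.

Lemma EqcP C : reflect (exists2 R, inc R & C = cls u v inc R) (C \in Eqc u v inc).
Proof.
apply: (iffP imsetP) => [[R]|[R iR ->]]; first by rewrite inE => iR ->; exists R.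
by exists R; rewrite ?inE.
Qed.

Lemma cls_Eqc R : inc R -> cls u v inc R \in Eqc u v inc.
Proof. by move=> iR; apply/EqcP; exists R. Qed.

Lemma Eqc_mem C S : C \in Eqc u v inc -> S \in C -> C = cls u v inc S /\ inc S.
Proof.
case/EqcP => R iR ->; rewrite clsE => /andP [iS hRS]; split => //; exact: cls_eq.
Qed.

Lemma Eqc_sim C R S : C \in Eqc u v inc -> R \in C -> S \in C -> sim u v R S.
Proof.
move=> HC RC SC; have [E _] := Eqc_mem HC RC.
by move: SC; rewrite E clsE => /andP [].
Qed.

Lemma Eqc_in C R : C \in Eqc u v inc -> inc R -> sim u v R R -> R \in cls u v inc R.
Proof. by move=> _ iR _; rewrite clsE iR sim_refl. Qed.

Lemma Eqc_eq C D R : C \in Eqc u v inc -> D \in Eqc u v inc -> R \in C -> R \in D -> C = D.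
Proof. by move=> HC HD RC RD; rewrite (Eqc_mem HC RC).1 (Eqc_mem HD RD).1. Qed.

Lemma Eqc_n0 C : C \in Eqc u v inc -> exists R, R \in C.
Proof. by case/EqcP => R iR ->; exists R; rewrite clsE iR sim_refl. Qed.


Lemma SF C F : sink u v inc C -> inc F -> u F \in Cop C -> F \in C.
Proof.
case/andP => HC /forall_inP H iF uF.
have := H _ (cls_Eqc iF); rewrite /lt_oplus /le_oplus.
have -> : [exists S in cls u v inc F, u S \in Cop C].
  by apply/existsP; exists F; rewrite clsE iF sim_refl uF.
by rewrite /= negbK => /eqP ->; rewrite clsE iF sim_refl.
Qed.

Lemma DEC E F z w : connect (dedge_wo u v E) z w ->
  connect (dedge_wo u v F) z w \/ connect (dedge_wo u v E) z (u F).
Proof.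
apply: (@connect_ind_last _ _ z (fun w => connect (dedge_wo u v F) z w \/ connect (dedge_wo u v E) z (u F))).
  by left; exact: connect0.
move=> y w' czy IH /dedge_woP [R [RE uR vR]].
case: (eqVneq R F) => [RF|RF]; first by right; rewrite -RF uR.
case: IH => h; last by right.
left; apply: connect_trans h (connect1 _); by apply/dedge_woP; exists R; split.
Qed.

Lemma DEC2 E a b : dpath u v a b ->
  connect (dedge_wo u v E) a b \/ (dpath u v a (u E) /\ dpath u v (v E) b).
Proof.
apply: (@connect_ind_last _ _ a (fun b => connect (dedge_wo u v E) a b \/ (dpath u v a (u E) /\ dpath u v (v E) b))).
  by left; exact: connect0.
move=> y w caY IH /dedgeP [R [uR vR]].
case: (eqVneq R E) => [RE|RE].
  by right; split; [rewrite -RE uR | rewrite -RE vR /dpath connect0].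
case: IH => [h|[h1 h2]].
  left; apply: connect_trans h (connect1 _); by apply/dedge_woP; exists R; split.
right; split => //; apply: connect_trans h2 (connect1 _); by apply/dedgeP; exists R; split.
Qed.

Lemma lt_trans (a b c : {set A}) : a \in Eqc u v inc -> b \in Eqc u v inc -> c \in Eqc u v inc ->
  lt_oplus u v inc a b -> lt_oplus u v inc b c -> lt_oplus u v inc a c.
Proof.
move=> Ha Hb Hc /andP [/existsP [S /andP [Sb uS]] ab] /andP [/existsP [T /andP [Tc uT]] bc].
have cST : cpath u v inc (u S) (u T) := (CopP _ _ uT) S Sb.
have uTa : u T \in Cop a := Cop_closed uS cST.
apply/andP; split; first by apply/existsP; exists T; rewrite Tc uTa.
apply/negP => /eqP eac; move: Tc; rewrite -eac => Ta.
have cTS : cpath u v inc (u T) (u S) := (CopP _ _ uS) T Ta.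
have hST : sim u v S T by rewrite simE (cp_dp cST) (cp_dp cTS).
move/negP: ab; apply; apply/eqP.
by rewrite (Eqc_mem Ha Ta).1 (Eqc_mem Hb Sb).1 (cls_eq hST).
Qed.

Lemma lt_irr (a : {set A}) : lt_oplus u v inc a a = false.
Proof. by rewrite /lt_oplus eqxx andbF. Qed.

Lemma sink_above C2 : C2 \in Eqc u v inc ->
  exists D, sink u v inc D /\ (D = C2 \/ lt_oplus u v inc C2 D).
Proof.
move=> HC2.
pose Aset := [set D in Eqc u v inc | (D == C2) || lt_oplus u v inc C2 D].
have A2 : C2 \in Aset by rewrite inE HC2 eqxx.
pose f := fun D => #|[set D' in Eqc u v inc | lt_oplus u v inc D' D]|.
case: (@arg_maxnP _ C2 (fun D => D \in Aset) f A2) => D DA Dmax.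
exists D; move: DA; rewrite inE => /andP [DE Dor].
split; last by case/orP: Dor => [/eqP ->|h]; [left|right].
rewrite /sink DE /=; apply/forall_inP => C' HC'; apply/negP => hDC'.
have C'A : C' \in Aset.
  rewrite inE HC'; case/orP: Dor => [/eqP DC|h]; first by rewrite -DC hDC' orbT.
  by rewrite (lt_trans HC2 DE HC' h hDC') orbT.
have := Dmax C' C'A; rewrite /f; apply/negP; rewrite -ltnNge; apply: proper_card.
apply/properP; split.
  apply/subsetP => x; rewrite !inE => /andP [xE hx].
  by rewrite xE (lt_trans xE DE HC' hx hDC').
by exists D; rewrite !inE ?DE ?hDC' ?lt_irr.
Qed.


Hypothesis Hsplit : splittable u v inc.
Hypothesis Hfc : f_closed u v inc.

Lemma coupled_sim E F : inc E -> inc F -> ua (NE E) (v E) (u F) -> ua (NE F) (v F) (u E) ->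
  sim u v E F.
Proof.
move=> iE iF h1 h2; apply: Hsplit => //.
by rewrite /coupled /coupled_plus !inE h1 h2 iE iF !orbT.
Qed.

Lemma fc R w : inc R -> cpath u v inc (v R) w -> connect (dedge_wo u v R) (u R) w ->
  cpath u v inc (u R) w.
Proof.
move=> iR h1 h2; have /subsetP /(_ w) := Hfc iR.
by rewrite inE !oplusE plusRE h1 h2 => /(_ isT).
Qed.

Definition eg E : rel V := fun a b =>
  [exists F, (u F == a) && (v F == b) && ~~ (inc F && sim u v E F)] &&
  (b \notin oplus u v inc (u E)).

Lemma GL E y : inc E -> v E \notin oplus u v inc (u E) -> connect (eg E) (v E) y ->
  [/\ y \notin NE E, (forall w, cpath u v inc y w -> w \in NE E -> cpath u v inc (u E) w)
    & ua (NE E) (v E) y].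
Proof.
move=> iE vEO.
apply: (@connect_ind_last _ _ (v E) (fun y => [/\ y \notin NE E,
   (forall w, cpath u v inc y w -> w \in NE E -> cpath u v inc (u E) w) & ua (NE E) (v E) y])).
  have P0 : forall w, cpath u v inc (v E) w -> w \in NE E -> cpath u v inc (u E) w.
    by move=> w h1; rewrite plusRE; apply: fc.
  have vN : v E \notin NE E.
    apply/negP => h; have := P0 _ (connect0 _ _) h; rewrite -oplusE => h'.
    by move/negP: vEO.
  by split => //; apply: ua_refl.
move=> y0 z0 _ [yN Py uay] /andP [/existsP [F /andP [/andP [/eqP uF /eqP vF] nF]] zO].
subst y0 z0.
have KC : forall w, cpath u v inc (v F) w -> w \in NE E -> cpath u v inc (u E) w.
  move=> w czw wN; case iF: (inc F); last first.
    apply: Py wN; apply: connect_trans czw; apply: connect1.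
    by apply/cedgeP; exists F; rewrite iF.
  apply/negPn/negP => hw.
  case: (boolP (w \in NE F)) => wF.
    have cyw : cpath u v inc (u F) w by apply: fc => //; rewrite -plusRE.
    by move/negP: hw; apply; apply: Py cyw wN.
  have h1 : ua (NE F) (v F) w.
    apply: (@dir_ua (cedge u v inc)) => //; first exact: ced_ued.
    move=> z' c1 c2; apply/negP => hz; move/negP: wF; apply.
    rewrite plusRE in hz; rewrite plusRE; exact: connect_trans hz (cp_wo iF c2).
  have wN' : connect (dedge_wo u v E) (u E) w by rewrite -plusRE.
  have h2 : ua (NE F) (u E) w.
    apply: (@dir_ua (dedge_wo u v E)) => //; first exact: wo_ued.
    move=> z' c1 c2; apply/negP => hz.
    case: (DEC F c2) => [h|h].
      by move/negP: wF; apply; rewrite plusRE in hz; rewrite plusRE; apply: connect_trans hz h.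
    by move/negP: yN; apply; rewrite plusRE; apply: connect_trans c1 h.
  have hFE : ua (NE F) (v F) (u E) := ua_trans h1 (ua_sym h2).
  have := coupled_sim iE iF uay hFE.
  by move=> hs; move: nF; rewrite iF hs.
split.
- apply/negP => zN; have := KC _ (connect0 _ _) zN; rewrite -oplusE => h.
  by move/negP: zO.
- exact: KC.
- apply: ua_step uay (edge_ued F) _.
  apply/negP => zN; have := KC _ (connect0 _ _) zN; rewrite -oplusE => h.
  by move/negP: zO.
Qed.

Lemma QC E y : inc E -> cpath u v inc (u E) y -> y \notin Cop (cls u v inc E) ->
  exists E', [/\ E' \in cls u v inc E, cpath u v inc (v E') y & ~~ cpath u v inc (u E') y].
Proof.
move=> iE cEy; rewrite CopE => /forall_inPn [E2 E2C nE2].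
suff H : forall a, dpath u v a (u E) -> dpath u v (u E) a -> ~~ cpath u v inc a y ->
  exists E', [/\ E' \in cls u v inc E, cpath u v inc (v E') y & ~~ cpath u v inc (u E') y].
  move: E2C; rewrite clsE simE => /andP [_ /andP [h1 h2]]; exact: H _ h2 h1 nE2.
move=> a; apply: (@connect_ind_first _ _ (u E) (fun a => dpath u v (u E) a ->
  ~~ cpath u v inc a y ->
  exists E', [/\ E' \in cls u v inc E, cpath u v inc (v E') y & ~~ cpath u v inc (u E') y])).
  by move=> _ /negP.
move=> a' b /dedgeP [H [uH vH]] cb IH dEa nca.
have dEb : dpath u v (u E) b.
  by apply: dp_trans dEa _; apply: connect1; rewrite -uH -vH; apply: edge_ded.
case cby: (cpath u v inc b y); last exact: IH dEb (negbT cby).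
case iH: (inc H).
  exists H; split; [| by rewrite vH | by rewrite uH].
  rewrite clsE iH simE uH dEa /=.
  by apply: connect_trans cb; apply: connect1; rewrite -uH -vH; apply: edge_ded.
move/negP: nca; case; apply: connect_trans cby; apply: connect1.
by apply/cedgeP; exists H; rewrite iH.
Qed.

Lemma cp_eg E a x : cpath u v inc a x -> ~~ cpath u v inc (u E) x -> connect (eg E) a x.
Proof.
move=> cax nEx.
suff: cpath u v inc x x -> connect (eg E) a x by apply; exact: connect0.
move: x cax nEx; apply: (@connect_ind_last _ _ a (fun x => ~~ cpath u v inc (u E) x ->
  cpath u v inc x x -> connect (eg E) a x)).
  by move=> _ _; exact: connect0.
move=> y z cay IH /cedgeP [F [iF uF vF]] nEz _.
have yz : cpath u v inc y z by apply: connect1; apply/cedgeP; exists F.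
apply: connect_trans (IH _ (connect0 _ _)) (connect1 _).
  by apply: contra nEz => h; apply: cp_trans h yz.
apply/andP; split; first by apply/existsP; exists F; rewrite uF vF !eqxx (negbTE iF).
by rewrite oplusE.
Qed.


Lemma sink_Eqc C : sink u v inc C -> C \in Eqc u v inc.
Proof. by case/andP. Qed.

Lemma Qcov C R y : sink u v inc C -> R \in C -> dpath u v (u R) y -> y \notin Cop C ->
  exists E, [/\ E \in C, v E \notin oplus u v inc (u E) & connect (eg E) (v E) y].
Proof.
move=> HS RC dRy yC; have HC := sink_Eqc HS.
pose Y x := x \in Cop C \/
  exists E, [/\ E \in C, v E \notin oplus u v inc (u E) & connect (eg E) (v E) x].
have H0 : forall E x, E \in C -> cpath u v inc (v E) x -> ~~ cpath u v inc (u E) x -> Y x.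
  move=> E x EC c1 c2; right; exists E; split => //; last exact: cp_eg.
  by rewrite oplusE; apply: contra c2 => h; apply: cp_trans h c1.
have H1 : forall E x, E \in C -> cpath u v inc (u E) x -> x \notin Cop C -> Y x.
  move=> E x EC c1 xC; have [CE iE] := Eqc_mem HC EC.
  have xC' : x \notin Cop (cls u v inc E) by rewrite -CE.
  have [E' [E'C c2 c3]] := QC iE c1 xC'.
  by apply: (H0 E') => //; rewrite CE.
have H2 : forall H, H \in C -> Y (v H).
  move=> H HC'; case: (boolP (v H \in Cop C)) => hv; first by left.
  case: (boolP (cpath u v inc (u H) (v H))) => hc; first exact: (H1 H).
  by right; exists H; split; [done | rewrite oplusE | exact: connect0].
have: Y y.
  move: y dRy yC => y dRy _.
  apply: (@connect_ind_last _ _ (u R) Y) dRy.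
    case: (boolP (u R \in Cop C)) => h; first by left.
    exact: (H1 R) (connect0 _ _) h.
  move=> y0 z _ IH /dedgeP [F [uF vF]]; subst y0 z.
  case: (boolP (v F \in Cop C)) => zC; first by left.
  case: IH => [yC'|[E [EC vE cE]]].
    case iF: (inc F).
      by apply: H2; apply: SF HS iF yC'.
    move/negP: zC; case; apply: Cop_closed yC' _; apply: connect1.
    by apply/cedgeP; exists F; rewrite iF.
  case hF: (inc F && sim u v E F).
    apply: H2; have [CE _] := Eqc_mem HC EC; by rewrite CE clsE.
  case: (boolP (v F \in oplus u v inc (u E))) => zO.
    by apply: (H1 E) => //; rewrite -oplusE.
  right; exists E; split => //; apply: connect_trans cE (connect1 _).
  apply/andP; split => //; apply/existsP; exists F; by rewrite !eqxx hF.
by case => [h|//]; move/negP: yC.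
Qed.

Lemma KL C R y : sink u v inc C -> R \in C -> dpath u v (u R) y -> y \notin Cop C ->
  exists2 E, E \in C & ua (NE E) (v E) y.
Proof.
move=> HS RC dRy yC; have [E [EC vE cE]] := Qcov HS RC dRy yC.
have [_ iE] := Eqc_mem (sink_Eqc HS) EC.
by exists E => //; have [] := GL iE vE cE.
Qed.

Lemma A2 C R y : sink u v inc C -> R \in C -> ua (Cop C) (v R) y ->
  exists2 E, E \in C & ua (NE E) (v E) y.
Proof.
move=> HS RC; have HC := sink_Eqc HS.
rewrite uaE => /andP [vRN]; apply: (@connect_ind_last _ _ (v R)
  (fun y => exists2 E, E \in C & ua (NE E) (v E) y)).
  by apply: KL HS RC _ vRN; apply: connect1; apply: edge_ded.
move=> y0 z _ [E EC uaE] /andP [/andP [yN zN] yz].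
case: (boolP (dpath u v (u R) z)) => dz; first exact: KL HS RC dz zN.
exists E => //; apply: ua_step uaE yz _; apply/negP => h; move/negP: dz; apply.
have := Eqc_sim HC RC EC; rewrite simE => /andP [h1 _].
by apply: (dp_trans h1); apply: (@wo_dp E); rewrite -plusRE.
Qed.

Lemma TI E T T' : ~~ sim u v E T -> ua (NE E) (v E) (u T) ->
  dpath u v (u T) (u T') -> dpath u v (u T') (u T) -> ua (NE E) (v E) (u T').
Proof.
move=> nsim H d1 d2; apply: (ua_trans H).
apply: (@dir_ua (dedge u v)) d1 _; first exact: ded_ued.
move=> z c1 c2; apply/negP => zN.
have dzT : dpath u v z (u T) := dp_trans c2 d2.
case: (DEC2 E dzT) => [h|[h1 h2]].
  have := ua_end H; rewrite plusRE => /negP; apply.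
  by rewrite plusRE in zN; apply: connect_trans zN h.
move/negP: nsim; apply; rewrite simE; apply/andP; split.
  by apply: dp_trans h2; apply: connect1; apply: edge_ded.
exact: dp_trans c1 h1.
Qed.


Local Notation cop C := (coupled_oplus u v inc C).

Lemma copE C X : (X \in cop C) = (X == C) ||
  ((X \in Eqc u v inc) && [exists R in C, exists S in X, ua (Cop C) (v R) (u S)]).
Proof. by rewrite /coupled_oplus !inE. Qed.

Lemma L1h C D : sink u v inc C -> D \in Eqc u v inc -> C != D -> D \in cop C ->
  exists2 E, E \in C & forall T, T \in D -> ua (NE E) (v E) (u T).
Proof.
move=> HS HD CD; rewrite copE eq_sym (negbTE CD) /= => /andP [_ /exists_inP [R RC /exists_inP [T TD p]]].
have [E EC uaE] := A2 HS RC p; exists E => // T' T'D.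
have HC := sink_Eqc HS.
have nsim : ~~ sim u v E T.
  apply/negP => hs; move/negP: CD; apply; apply/eqP.
  by rewrite (Eqc_mem HC EC).1 (cls_eq hs) -(Eqc_mem HD TD).1.
have := Eqc_sim HD TD T'D; rewrite simE => /andP [d1 d2]; exact: TI nsim uaE d1 d2.
Qed.

Lemma L1 C D : sink u v inc C -> sink u v inc D -> C != D -> D \in cop C -> C \in cop D -> False.
Proof.
move=> HS HT CD h1 h2.
have HC := sink_Eqc HS; have HD := sink_Eqc HT.
have [E EC hE] := L1h HS HD CD h1.
have DC : D != C by rewrite eq_sym.
have [E' E'D hE'] := L1h HT HC DC h2.
have [_ iE] := Eqc_mem HC EC; have [_ iE'] := Eqc_mem HD E'D.
have hs := coupled_sim iE iE' (hE E' E'D) (hE' E EC).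
move/eqP: CD; apply; rewrite (Eqc_mem HC EC).1 (Eqc_mem HD E'D).1; exact: cls_eq.
Qed.

Lemma BACKC C D R' y : C \in Eqc u v inc -> D \in Eqc u v inc -> C != D -> R' \in D ->
  y \in Cop C -> ua (Cop D) (v R') y -> C \in cop D.
Proof.
move=> HC HD CD R'D yC p.
have [R0 R0C] := Eqc_n0 HC.
have c : cpath u v inc (u R0) y := (CopP _ _ yC) R0 R0C.
have h : ua (Cop D) (u R0) y.
  apply: (@dir_ua (cedge u v inc)) c _; first exact: ced_ued.
  move=> z c1 c2; apply/negP => zD; have := Cop_closed zD c2.
  by move: (ua_end p) => /negP.
rewrite copE (negbTE CD) HC /=; apply/exists_inP; exists R' => //.
by apply/exists_inP; exists R0 => //; exact: ua_trans p (ua_sym h).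
Qed.

Lemma exitL C R T x : sink u v inc C -> ua (Cop C) (v R) (u T) -> R \in C -> dpath u v (u T) x ->
  x \in Cop C \/ exists2 R'', R'' \in C & ua (Cop C) (v R'') x.
Proof.
move=> HS P RC; apply: (@connect_ind_last _ _ (u T) (fun x => x \in Cop C \/
  exists2 R'', R'' \in C & ua (Cop C) (v R'') x)).
  by right; exists R.
move=> y z _ IH /dedgeP [F [uF vF]]; subst y z.
case: (boolP (v F \in Cop C)) => zC; first by left.
case: IH => [yC|[R'' R''C p]].
  case iF: (inc F).
    by right; exists F; [exact: SF HS iF yC | exact: ua_refl].
  move/negP: zC; case; apply: Cop_closed yC _; apply: connect1.
  by apply/cedgeP; exists F; rewrite iF.
by right; exists R'' => //; apply: ua_step p (edge_ued F) zC.
Qed.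

Lemma L2 C D : sink u v inc C -> sink u v inc D -> C != D -> D \in cop C -> cop D \subset cop C.
Proof.
move=> HS HT CD hDC; have HC := sink_Eqc HS; have HD := sink_Eqc HT.
apply/subsetP => X; rewrite copE => /orP [/eqP -> //|].
move=> /andP [HX /exists_inP [R' R'D /exists_inP [W WX Q]]].
rewrite copE HX /=; apply/orP; right.
move: (hDC); rewrite copE eq_sym (negbTE CD) /= => /andP [_ /exists_inP [R RC /exists_inP [T TD P]]].
have := Eqc_sim HD TD R'D; rewrite simE => /andP [dT _].
have [_ iR'] := Eqc_mem HD R'D.
case: (exitL HS P RC dT) => [uC|[R'' R''C p1]].
  have R'C := SF HS iR' uC.
  by move/negP: CD; case; apply/eqP; apply: Eqc_eq HC HD R'C R'D.
have noC : forall z, ua (Cop D) (v R') z -> z \notin Cop C.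
  move=> z H; apply/negP => zC; apply: (L1 HS HT CD hDC).
  exact: BACKC HC HD CD R'D zC H.
have Q' := ua_conv Q noC.
have vR'D : v R' \notin Cop D by move: Q; rewrite uaE => /andP [].
have vR'C : v R' \notin Cop C := noC _ (ua_refl vR'D).
have p2 := ua_step p1 (edge_ued R') vR'C.
apply/exists_inP; exists R'' => //; apply/exists_inP; exists W => //; exact: ua_trans p2 Q'.
Qed.

Lemma main_sec Csep : sink u v inc Csep ->
  (forall C, sink u v inc C -> #|cop Csep| <= #|cop C|) -> separator u v inc Csep.
Proof.
move=> Hsink Hmin.
rewrite /separator Hsink /=; apply/forall_inP => C2 HC2; apply/implyP => C2ne.
apply/negPn/negP => nlt.
have HCs := sink_Eqc Hsink.
move: (HC2); rewrite copE (negbTE C2ne) /= => /andP [HC2E /exists_inP [R RC /exists_inP [S SC2 P]]].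
have [D [HD Dor]] := sink_above HC2E.
have HDE := sink_Eqc HD.
have DCs : Csep != D.
  apply/eqP => e; case: Dor => [DC2|hlt].
    by move/eqP: C2ne; apply; rewrite -DC2 e.
  by move/negP: nlt; apply; rewrite e.
have hDC : D \in cop Csep.
  rewrite copE eq_sym (negbTE DCs) HDE /=; apply/exists_inP; exists R => //.
  case: Dor => [DC2|hlt]; first by apply/exists_inP; exists S; rewrite ?DC2.
  move: hlt => /andP [/exists_inP [T TD uT] _]; apply/exists_inP; exists T => //.
  have cST : cpath u v inc (u S) (u T) := (CopP _ _ uT) S SC2.
  apply: (ua_trans P); apply: (@dir_ua (cedge u v inc)) cST _; first exact: ced_ued.
  move=> z c1 c2; apply/negP => zC; have uTC := Cop_closed zC c2.
  have [_ iT] := Eqc_mem HDE TD.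
  have TCs := SF Hsink iT uTC.
  by move/negP: DCs; apply; apply/eqP; apply: Eqc_eq HCs HDE TCs TD.
have nC : Csep \notin cop D by apply/negP => h; exact: L1 Hsink HD DCs hDC h.
have sub := L2 Hsink HD DCs hDC.
have := Hmin D HD; apply/negP; rewrite -ltnNge; apply: proper_card.
by apply/properP; split => //; exists Csep => //; rewrite copE eqxx.
Qed.

End G.

Unset Implicit Arguments.
Theorem theorem5p3 (V A : finType) (u v : A -> V) (inc : pred A)
  (Huv : forall R : A, u R != v R)
  (Hsplit : splittable u v inc)
  (Hfc : f_closed u v inc)
  (Hne : exists R : A, inc R)
  (Csep : {set A})
  (Hsink : sink u v inc Csep)
  (Hmin : forall C : {set A}, sink u v inc C ->
     #|coupled_oplus u v inc Csep| <= #|coupled_oplus u v inc C|) :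
  separator u v inc Csep.
Proof. exact: (main_sec Hsplit Hfc Hsink Hmin). Qed.
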